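(* For every integer $n \ge 1$ there exists a word $w_n$ of length $6n$ over an alphabet of $2n$ letters with $\mathrm{E}(w_n) = 1$ such that $$n - \tfrac{1}{6} < \mathrm{E}_{\mathcal{I}}(w_n) < \infty,$$ where $\mathrm{E}_{\mathcal{I}}$ is taken with $\Sigma$ the $2n$-letter alphabet of $w_n$ and $\Gamma$ any finite alphabet with at least two letters.
   Context: For a nonempty word $v$ and integer $p\ge 0$, $v^{p/|v|}$ denotes the prefix of length $p$ of $vvv\cdots$. For a nonempty finite word $u$, $\mathrm{E}(u) = \sup\{ r \in \mathbb{Q} : u = v^r \text{ for some nonempty word } v\}$. $\mathcal{I}$ is the set of injective morphisms $\Sigma^* \to \Gamma^*$, and for $w\in\Sigma^+$, $\mathrm{E}_{\mathcal{I}}(w) = \sup\{\mathrm{E}(h(w)) : h \in \mathcal{I}\}$. *)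

(* Defs.v *)
From mathcomp Require Import all_boot all_order all_algebra.
From mathcomp Require Import boolp classical_sets reals ereal Rstruct.
Set Implicit Arguments. Unset Strict Implicit. Unset Printing Implicit Defensive.
Import Order.TTheory GRing.Theory Num.Theory.

Local Open Scope ring_scope.
Local Open Scope classical_set_scope.

(* v^{p/|v|} : the prefix of length p of v v v ... (v nonempty) *)
Definition wpow {T : Type} (v : seq T) (p : nat) : seq T :=
  take p (flatten (nseq p v)).

Definition is_power {T : Type} (u v : seq T) (r : rat) : Prop :=
  v <> [::] /\ exists p : nat, r = p%:R / (size v)%:R /\ u = wpow v p.

Definition Eexp {T : Type} (u : seq T) : \bar Rdefinitions.R :=
  ereal_sup [set x | exists (r : rat) (v : seq T), is_power u v r /\ x = (ratr r)%:E].

Definition word_morphism {S G : Type} (h : seq S -> seq G) : Prop :=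
  forall u v, h (u ++ v) = h u ++ h v.

Definition EI {S : Type} (G : Type) (w : seq S) : \bar Rdefinitions.R :=
  ereal_sup [set x | exists h : seq S -> seq G,
                 word_morphism h /\ injective h /\ x = Eexp (h w)].

(* Main.v *)
Require Import Defs.
From mathcomp Require Import all_boot all_order all_algebra.
From mathcomp Require Import boolp classical_sets reals ereal Rstruct.
From mathcomp Require Import zify lra.
Import Order.TTheory GRing.Theory Num.Theory.

Section Comb.
Variable T : eqType.
Variable x0 : T.

Definition per (q : nat) (u : seq T) :=
  forall i, i < size u -> nth x0 u i = nth x0 u (i %% q).

Lemma nth_flatten_nseq (v : seq T) m i :
  i < m * size v -> nth x0 (flatten (nseq m v)) i = nth x0 v (i %% size v).
Proof.
elim: m i => [|m IH] i //=; rewrite mulSn => Hi.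
rewrite nth_cat; case: ltnP => H; first by rewrite modn_small.
rewrite IH; last by lia.
by rewrite -{2}(subnK H) modnDr.
Qed.

Lemma size_flatten_nseq (v : seq T) m : size (flatten (nseq m v)) = m * size v.
Proof. by elim: m => //= m IH; rewrite size_cat IH mulSn. Qed.

Lemma wpow_size (v : seq T) p : v <> [::] -> size (wpow v p) = p.
Proof.
move=> vn; rewrite /wpow size_take size_flatten_nseq.
case: v vn => // a v _ /=; case: ifP => //; rewrite mulnS; lia.
Qed.

Lemma wpow_per (v : seq T) p : v <> [::] -> per (size v) (wpow v p).
Proof.
move=> vn i; rewrite wpow_size // => Hi.
rewrite /wpow !nth_take //; last by apply: leq_ltn_trans Hi; apply: leq_mod.
rewrite nth_flatten_nseq; last first.
  case: v vn => // a v _ /=; rewrite mulnS; lia.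
case: v vn => // a v _ /=.
rewrite nth_flatten_nseq ?modn_mod //.
have p0 : 0 < p by lia.
apply: (leq_trans (ltn_pmod _ _)) => //; rewrite leq_pmull //.
Qed.

Lemma per1_per2 d (u : seq T) : 0 < d ->
  (forall i, i + d < size u -> nth x0 u i = nth x0 u (i + d)) -> per d u.
Proof.
move=> dpos H i; elim/ltn_ind: i => i IH Hi.
case: (ltnP i d) => Hid; first by rewrite modn_small.
have e : i = (i - d) + d by rewrite subnK.
have -> : i %% d = (i - d) %% d by rewrite {1}e modnDr.
rewrite {1}e -H; last by rewrite -e.
apply: IH; lia.
Qed.

Lemma sync q (u : seq T) i j : 0 < q -> per q u ->
  (forall d, 0 < d < q -> ~ per d u) -> i <= j -> j + q <= size u ->
  (forall t, t < q -> nth x0 u (i + t) = nth x0 u (j + t)) -> (j - i) %% q = 0.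
Proof.
move=> q0 Pq Hmin ij jq Hs.
set d := (j - i) %% q.
case: (posnP d) => // dpos; exfalso.
apply: (Hmin d); first by rewrite dpos ltn_pmod.
apply: per1_per2 => // m Hm.
set t := (m + i * q.-1) %% q.
have tq : t < q by rewrite ltn_pmod.
have e1 : (i + t) %% q = m %% q.
  rewrite /t modnDmr.
  have -> : i + (m + i * q.-1) = i * q + m.
    rewrite addnCA addnC; congr (_ + _); rewrite -{1}(muln1 i) -mulnDr add1n prednK //.
  by rewrite modnMDl.
have e2 : (j + t) %% q = (m + d) %% q.
  have -> : j + t = (j - i) + (i + t) by lia.
  by rewrite -modnDm e1 modnDm /d addnC modnDmr.
rewrite Pq; last by lia.
rewrite -e1 -Pq; last by lia.
rewrite Hs // Pq; last by lia.
by rewrite e2 -Pq.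
Qed.

Lemma nth_mid (s1 s2 s3 : seq T) t : t < size s2 ->
  nth x0 (s1 ++ s2 ++ s3) (size s1 + t) = nth x0 s2 t.
Proof. by move=> H; rewrite nth_cat ltnNge leq_addr /= addKn nth_cat H. Qed.


Lemma key q (u pre post a b : seq T) :
  u = pre ++ a ++ a ++ b ++ a ++ b ++ b ++ post -> 0 < q -> per q u ->
  (forall d, 0 < d < q -> ~ per d u) -> q <= size a \/ q <= size b ->
  a ++ b = b ++ a.
Proof.
move=> Hu q0 Pq Hmin Hab.
have occ : forall s1 x s3, u = s1 ++ x ++ s3 -> forall t, t < size x ->
    nth x0 u (size s1 + t) = nth x0 x t.
  by move=> s1 x s3 -> t Ht; rewrite nth_mid.
have occs : forall s1 x s3, u = s1 ++ x ++ s3 -> size s1 + size x <= size u.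
  by move=> s1 x s3 ->; rewrite !size_cat; lia.
have syn : forall s1 s3 s1' s3' x, u = s1 ++ x ++ s3 -> u = s1' ++ x ++ s3' ->
    size s1 <= size s1' -> q <= size x -> (size s1' - size s1) %% q = 0.
  move=> s1 s3 s1' s3' x E1 E2 le qx.
  apply: (@sync q u (size s1) (size s1') q0 Pq Hmin le).
    by apply: leq_trans (occs _ _ _ E2); rewrite leq_add2l.
  move=> t tq; rewrite (occ _ _ _ E1) ?(occ _ _ _ E2) //; lia.
have E1 : u = pre ++ a ++ (a ++ b ++ a ++ b ++ b ++ post) by [].
have E2 : u = (pre ++ a) ++ a ++ (b ++ a ++ b ++ b ++ post) by rewrite Hu -!catA.
have E3 : u = (pre ++ a ++ a) ++ b ++ (a ++ b ++ b ++ post) by rewrite Hu -!catA.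
have E4 : u = (pre ++ a ++ a ++ b) ++ a ++ (b ++ b ++ post) by rewrite Hu -!catA.
have E5 : u = (pre ++ a ++ a ++ b ++ a) ++ b ++ (b ++ post) by rewrite Hu -!catA.
have E6 : u = (pre ++ a ++ a ++ b ++ a ++ b) ++ b ++ post by rewrite Hu -!catA.
have [HA HB] : size a %% q = 0 /\ size b %% q = 0.
  case: Hab => Hq.
    have h1 := syn _ _ _ _ _ E1 E2 ltac:(rewrite !size_cat; lia) Hq.
    have h2 := syn _ _ _ _ _ E2 E4 ltac:(rewrite !size_cat; lia) Hq.
    move: h1 h2; rewrite !size_cat.
    have -> : size pre + size a - size pre = size a by lia.
    have -> : size pre + (size a + (size a + size b)) - (size pre + size a)
      = size a + size b by lia.
    by move=> h1; rewrite -modnDml h1 add0n.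
  have h1 := syn _ _ _ _ _ E3 E5 ltac:(rewrite !size_cat; lia) Hq.
  have h2 := syn _ _ _ _ _ E5 E6 ltac:(rewrite !size_cat; lia) Hq.
  move: h1 h2; rewrite !size_cat.
  have -> : size pre + (size a + (size a + (size b + size a))) -
    (size pre + (size a + size a)) = size b + size a by lia.
  have -> : size pre + (size a + (size a + (size b + (size a + size b)))) -
    (size pre + (size a + (size a + (size b + size a)))) = size b by lia.
  by move=> h1 h2; split=> //; move: h1; rewrite -modnDml h2 add0n.
have modA : forall x, (x + size a) %% q = x %% q by move=> x; rewrite -modnDmr HA addn0.
have modB : forall x, (x + size b) %% q = x %% q by move=> x; rewrite -modnDmr HB addn0.
pose X t := nth x0 u ((size pre + t) %% q).
have ha : forall t, t < size a -> nth x0 a t = X t.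
  move=> t Ht; rewrite -(occ _ _ _ E1) // Pq //.
  by apply: leq_trans (occs _ _ _ E1); rewrite ltn_add2l.
have hb : forall t, t < size b -> nth x0 b t = X t.
  move=> t Ht; rewrite -(occ _ _ _ E3) // Pq; last first.
    by apply: leq_trans (occs _ _ _ E3); rewrite ltn_add2l.
  rewrite /X !size_cat.
  have -> : size pre + (size a + size a) + t = size pre + t + size a + size a by lia.
  by rewrite !modA.
apply: (@eq_from_nth _ x0); first by rewrite !size_cat addnC.
move=> t; rewrite size_cat => Ht.
rewrite !nth_cat.
have XA : t >= size a -> X (t - size a) = X t.
  move=> h; rewrite /X -(modA (size pre + (t - size a))).
  by have -> : size pre + (t - size a) + size a = size pre + t by lia.
have XB : t >= size b -> X (t - size b) = X t.
  move=> h; rewrite /X -(modB (size pre + (t - size b))).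
  by have -> : size pre + (t - size b) + size b = size pre + t by lia.
case: ltnP => h1; case: ltnP => h2.
- by rewrite ha // hb.
- by rewrite ha // ha ?XB //; lia.
- by rewrite hb ?XA //; [rewrite hb //|lia].
- by rewrite hb ?ha ?XA ?XB //; lia.
Qed.

End Comb.

Definition blkn (k : nat) : seq nat := [:: k.*2; k.*2; k.*2.+1; k.*2; k.*2.+1; k.*2.+1].
Definition wseg (m k : nat) : seq nat := flatten [seq blkn j | j <- iota m k].
Definition wn (n : nat) : seq nat := wseg 0 n.

Lemma wseg_S m k : wseg m k.+1 = blkn m ++ wseg m.+1 k.
Proof. by []. Qed.

Lemma size_wseg m k : size (wseg m k) = 6 * k.
Proof. elim: k m => [|k IH] m //; rewrite wseg_S size_cat IH /=; lia. Qed.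

Lemma mem_wseg m k x : x \in wseg m k -> m.*2 <= x < (m + k).*2.
Proof.
move=> /flatten_mapP [j]; rewrite mem_iota => /andP[h1 h2].
rewrite !inE; repeat (case: eqP => [->|_] /=; first lia); done.
Qed.

Lemma wseg_split n k : k < n ->
  wn n = wseg 0 k ++ blkn k ++ wseg k.+1 (n - k.+1).
Proof.
move=> kn; rewrite /wn /wseg.
have -> : n = k + (n - k.+1).+1 by lia.
rewrite iotaD map_cat flatten_cat add0n /=.
by have -> : k + (n - k.+1).+1 - k.+1 = n - k.+1 by lia.
Qed.

Lemma mem_wn n c : c < n.*2 -> c \in wn n.
Proof.
move=> cn; apply/flatten_mapP; exists c./2.
  rewrite mem_iota add0n; lia.
have ec := odd_double_half c.
by case: (odd c) ec => ec; rewrite -{1}ec /= ?add1n ?add0n !inE eqxx ?orbT.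
Qed.

Lemma wn_unbordered n s : 0 < n -> 0 < s < 6 * n ->
  ~ (forall i, i < 6 * n -> nth 0 (wn n) i = nth 0 (wn n) (i %% s)).
Proof.
move=> n0 /andP[s0 sn] H.
have Hw : wn n = blkn 0 ++ wseg 1 n.-1 by rewrite /wn; case: n n0 {sn H}.
have B : forall i, i < 6 -> nth 0 (wn n) i = nth 0 (blkn 0) i by move=> i hi; rewrite Hw nth_cat hi.
case: (ltnP s 6) => s6.
  move: s0 s6 H; case: s sn => [|[|[|[|[|[|s]]]]]] //= sn _ _ H.
  - by have := H 2 ltac:(lia); rewrite !B.
  - by have := H 2 ltac:(lia); rewrite !B.
  - by have := H 4 ltac:(lia); rewrite !B.
  - by have := H 4 ltac:(lia); rewrite !B.
  - by have := H 5 ltac:(lia); rewrite !B.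
have := H s sn; rewrite modnn (B 0) // Hw nth_cat /= ltnNge s6 /=.
have hs : s - 6 < size (wseg 1 n.-1) by rewrite size_wseg; lia.
have := @mem_wseg _ _ _ (mem_nth 0 hs); move=> + E; rewrite E /=; lia.
Qed.

Set Implicit Arguments. Unset Strict Implicit.

Section Lower.
Variables (G : eqType) (g0 g1 : G) (n : nat).

Definition Z k := nseq k g0.
Definition img (c : nat) : seq G :=
  if odd c then Z (n - 1 - c./2) ++ g1 :: g1 :: Z (c./2).+1
  else Z (n - c./2) ++ g1 :: Z (c./2).+1.
Definition lz (c : nat) := if odd c then n - 1 - c./2 else n - c./2.
Definition Kw := g1 :: Z n.+1 ++ g1 :: Z n ++ g1 :: g1 :: Z n.+1 ++ g1 :: Z n
   ++ g1 :: g1 :: Z n ++ [:: g1; g1].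
Definition Vw := Z n ++ Kw.

Lemma zz a b s : Z a ++ Z b ++ s = Z (a + b) ++ s.
Proof. by rewrite /Z nseqD catA. Qed.

Lemma img_nth c : c < 2 * n ->
  [/\ forall i, i < lz c -> nth g0 (img c) i = g0,
      nth g0 (img c) (lz c) = g1,
      nth g0 (img c) (lz c).+1 = (if odd c then g1 else g0) &
      (lz c).+2 <= size (img c)].
Proof.
move=> cn; rewrite /img /lz; case: (odd c); split.
- by move=> i hi; rewrite nth_cat size_nseq hi nth_nseq hi.
- by rewrite nth_cat size_nseq ltnn subnn.
- by rewrite nth_cat size_nseq ltnNge leqnSn /= subSnn.
- by rewrite size_cat size_nseq /=; lia.
- by move=> i hi; rewrite nth_cat size_nseq hi nth_nseq hi.
- by rewrite nth_cat size_nseq ltnn subnn.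
- by rewrite nth_cat size_nseq ltnNge leqnSn /= subSnn.
- by rewrite size_cat size_nseq /=; lia.
Qed.

Lemma img_nonnil c : img c <> [::].
Proof. by rewrite /img; case: (odd c); case: (Z _). Qed.

Lemma img_prefix c d s t : g0 != g1 -> c < 2 * n -> d < 2 * n ->
  img c ++ s = img d ++ t -> c = d.
Proof.
move=> hg cn dn E.
have [c1 c2 c3 c4] := img_nth cn.
have [d1 d2 d3 d4] := img_nth dn.
have hlt : forall c d s t, c < 2 * n -> d < 2 * n -> img c ++ s = img d ++ t ->
    ~ lz c < lz d.
  move=> c' d' s' t' cn' dn' E' lt.
  have [e1 e2 e3 e4] := img_nth cn'.
  have [f1 f2 f3 f4] := img_nth dn'.
  have := congr1 (nth g0 ^~ (lz c')) E'.
  rewrite !nth_cat ifT; last by lia.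
  rewrite ifT; last by lia.
  rewrite e2 f1 //.
  by move=> h; move: hg; rewrite h eqxx.
have ez : lz c = lz d.
  case: (ltngtP (lz c) (lz d)) => // h; exfalso.
    exact: (hlt _ _ _ _ cn dn E h).
  exact: (hlt _ _ _ _ dn cn (esym E) h).
have eo : odd c = odd d.
  have := congr1 (nth g0 ^~ (lz c).+1) E.
  rewrite !nth_cat ifT; last by lia.
  rewrite ifT; last by lia.
  rewrite c3 ez d3.
  by case: (odd c); case: (odd d) => // h; move: hg; rewrite h eqxx.
move: ez; rewrite /lz -eo.
have h1 := odd_double_half c; have h2 := odd_double_half d.
rewrite -eo in h2.
case: (odd c) h1 h2 => /= h1 h2 ez; lia.
Qed.

Lemma img_blk k : k < n ->
  flatten (map img (blkn k)) = Z (n - k) ++ Kw ++ Z k.+1.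
Proof.
move=> kn; rewrite /blkn /= /img /= odd_double doubleK uphalf_double /=.
rewrite /Kw -!catA /= !zz.
have -> : k + (n - k) = n by lia.
have -> : k + (n - 1 - k) = n.-1 by lia.
have zn : forall s, g0 :: (Z n.-1 ++ s) = Z n ++ s.
  by move=> s; rewrite /Z -[in RHS](@prednK n) //; lia.
rewrite !zn -!catA /= cats0.
do 6 try (rewrite -!catA /=). reflexivity.
Qed.

Lemma wseg_rcons m : wseg 0 m.+1 = wseg 0 m ++ blkn m.
Proof. by rewrite /wseg -addn1 iotaD map_cat flatten_cat /= ?cats0. Qed.

Lemma img_prefixes m : m <= n ->
  flatten (map img (wseg 0 m)) = flatten (nseq m Vw) ++ Z m.
Proof.
elim: m => [|m IH] mn //.
rewrite wseg_rcons map_cat flatten_cat IH; last by lia.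
rewrite img_blk; last by lia.
have f1 : flatten (nseq 1 Vw) = Vw by rewrite /= cats0.
rewrite -addn1 nseqD flatten_cat f1 -!catA zz.
have -> : m + (n - m) = n by lia.
by [].
Qed.

Lemma wpow_Vw : 0 < n -> wpow Vw (n * size Vw + n) = flatten (nseq n Vw) ++ Z n.
Proof.
move=> n0.
have sV : 0 < size Vw by rewrite /Vw size_cat /=; lia.
have m0 : 0 < n * size Vw by rewrite muln_gt0 n0.
rewrite /wpow.
have -> : flatten (nseq (n * size Vw + n) Vw)
    = flatten (nseq n Vw) ++ Vw ++ flatten (nseq (n * size Vw).-1 Vw).
  have e : n * size Vw + n = n + (n * size Vw).-1.+1 by lia.
  by rewrite e nseqD flatten_cat.
rewrite take_cat size_flatten_nseq ltnNge leq_addr /=.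
have -> : n * size Vw + n - n * size Vw = n by lia.
by rewrite /Vw -catA take_size_cat // size_nseq.
Qed.


End Lower.

Unset Implicit Arguments.

Lemma ub_main n (G : finType) (g0 : G) (x0 : 'I_(2 * n)) (h : seq 'I_(2 * n) -> seq G) v p :
  word_morphism h -> injective h -> v <> [::] ->
  h (map (insubd x0) (wn n)) = wpow v p -> p <= 6 * n * size v.
Proof.
move=> hm hi vn E.
set W := map (insubd x0) (wn n) in E.
set u := h W.
have wlt : forall c, c \in wn n -> c < 2 * n.
  by move=> c /mem_wseg; lia.
have valmk : forall c, c < 2 * n -> val (insubd x0 c : 'I_(2 * n)) = c.
  by move=> c hc; rewrite val_insubd hc.
have Lp : size u = p by rewrite /u E wpow_size.
have Pv : per G g0 (size v) u by rewrite /u E; apply: wpow_per.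
case: (leqP p (6 * n * size v)) => // Hlt; exfalso.
pose perb q := (0 < q) && all (fun i => nth g0 u i == nth g0 u (i %% q)) (iota 0 (size u)).
have perbP1 : forall q, perb q -> per G g0 q u /\ 0 < q.
  move=> q /andP[q0 /allP H]; split=> // i hi'; apply/eqP/H; by rewrite mem_iota add0n hi'.
have perbP2 : forall q, per G g0 q u -> 0 < q -> perb q.
  move=> q H q0; rewrite /perb q0 /=; apply/allP => i; rewrite mem_iota => hi'.
  by apply/eqP/H; move: hi'; rewrite add0n => /andP[].
have sv0 : 0 < size v by case: v vn {E Pv Hlt}.
have ex : exists q, perb q by exists (size v); exact: perbP2.
case: (ex_minnP ex) => q /perbP1 [Pq q0] qmin.
have qv : q <= size v by apply: qmin; exact: perbP2.
have Hmin : forall d, 0 < d < q -> ~ per G g0 d u.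
  move=> d /andP[d0 dq] Pd; have := qmin d (perbP2 d Pd d0); lia.
have hnil : h [::] = [::].
  have := congr1 size (hm [::] [::]); rewrite size_cat /=.
  by case: (h [::]) => //= a l; lia.
have hc : forall x s, h (x :: s) = h [:: x] ++ h s := fun x s => hm [:: x] s.
have [y Hy] : exists y : 'I_(2 * n), q <= size (h [:: y]).
  case: (boolP [exists y : 'I_(2 * n), q <= size (h [:: y])]) => [/existsP //|].
  move=> /existsPn Hs; exfalso.
  have : forall s, size (h s) <= size s * q.
    elim=> [|x s IH]; first by rewrite hnil.
    rewrite hc size_cat /= [(size s).+1 * q]mulSn leq_add //.
    by have := Hs x; rewrite -ltnNge => /ltnW.
  move=> /(_ W); rewrite -/u Lp /W size_map size_wseg => H1.
  have : 6 * n * q <= 6 * n * size v by rewrite leq_mul2l qv orbT.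
  lia.
set k := (nat_of_ord y)./2.
have kn : k < n by have := ltn_ord y; rewrite /k; lia.
set a : 'I_(2 * n) := insubd x0 k.*2.
set b : 'I_(2 * n) := insubd x0 k.*2.+1.
have va : (a : nat) = k.*2 := valmk k.*2 ltac:(lia).
have vb : (b : nat) = k.*2.+1 := valmk k.*2.+1 ltac:(lia).
have yab : y = a \/ y = b.
  have := odd_double_half (nat_of_ord y); rewrite -/k.
  case: (odd (nat_of_ord y)) => /= e; [right|left]; apply: ord_inj; rewrite ?va ?vb; lia.
have Hu : u = h (map (insubd x0) (wseg 0 k)) ++ h [:: a] ++ h [:: a] ++ h [:: b] ++
    h [:: a] ++ h [:: b] ++ h [:: b] ++ h (map (insubd x0) (wseg k.+1 (n - k.+1))).
  rewrite /u /W (@wseg_split n k kn) !map_cat.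
  have -> : map (insubd x0) (blkn k) = [:: a; a; b; a; b; b] by [].
  rewrite (hm (map (insubd x0) (wseg 0 k))) (hm [:: a; a; b; a; b; b]).
  rewrite (hc a [:: a; b; a; b; b]) (hc a [:: b; a; b; b]) (hc b [:: a; b; b]).
  by rewrite (hc a [:: b; b]) (hc b [:: b]) -!catA.
have Hab : q <= size (h [:: a]) \/ q <= size (h [:: b]).
  by case: yab => <-; [left|right].
have C := @key G g0 q u _ _ _ _ Hu q0 Pq Hmin Hab.
have : h [:: a; b] = h [:: b; a] by rewrite (hc a [:: b]) (hc b [:: a]) C.
move/hi => [] /(congr1 (@nat_of_ord _)); rewrite va vb; lia.
Qed.

Local Open Scope ring_scope.

Lemma wpow_self (T : Type) (s : seq T) : s <> [::] -> wpow s (size s) = s.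
Proof.
case: s => // a s _; rewrite /wpow /=.
by rewrite take_cat ltnn subnn take0 cats0.
Qed.

Theorem theorem11 (n : nat) (hn : (1 <= n)%N) :
  exists w : seq 'I_(2 * n),
    size w = (6 * n)%N /\
    (forall a : 'I_(2 * n), a \in w) /\
    Eexp w = 1%E /\
    forall G : finType, (2 <= #|G|)%N ->
      ((n%:R - 1 / 6 : Rdefinitions.R)%:E < EI G w)%E /\ (EI G w < +oo)%E.
Proof.
have n2 : (0 < 2 * n)%N by lia.
pose x0 : 'I_(2 * n) := Ordinal n2.
have wlt : forall c, c \in wn n -> (c < 2 * n)%N.
  by move=> c /mem_wseg; lia.
have valmk : forall c, (c < 2 * n)%N -> val (insubd x0 c : 'I_(2 * n)) = c.
  by move=> c hc; rewrite val_insubd hc.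
set W := map (insubd x0) (wn n).
have sW : size W = (6 * n)%N by rewrite size_map size_wseg.
have vW : map val W = wn n.
  rewrite -map_comp; apply: map_id_in => c /wlt h /=; exact: valmk.
exists W; split => //; split.
  move=> a; rewrite -[a](valKd x0) map_f // mem_wn //.
  by apply: leq_trans (ltn_ord a) _; lia.
split.
  rewrite /Eexp; apply/eqP; rewrite eq_le; apply/andP; split.
    apply: ge_ereal_sup => x [r [v [[vn [p [-> E]]] ->]]].
    have sp : size W = p by rewrite E wpow_size.
    have sv0 : (0 < size v)%N by case: v vn {E}.
    have pv : (p <= size v)%N.
      rewrite leqNgt; apply/negP => Hlt.
      have Pv := @wpow_per _ x0 v p vn; rewrite -E in Pv.
      apply: (@wn_unbordered n (size v) hn); first by rewrite sv0 -sW sp.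
      move=> i hi.
      have hi' : (i < size W)%N by rewrite sW.
      have hi2 : (i %% size v < size W)%N by apply: leq_ltn_trans hi'; apply: leq_mod.
      by rewrite -vW (nth_map x0) // (nth_map x0) // Pv.
    rewrite lee_fin -(rmorph1 (@ratr Rdefinitions.R)) ler_rat.
    by rewrite ler_pdivrMr ?ltr0n // mul1r ler_nat.
  apply: ereal_sup_ubound; exists 1, W; split; last by rewrite rmorph1.
  split; first by move=> h; move: sW; rewrite h /=; lia.
  exists (size W); split; last by rewrite wpow_self // => h; move: sW; rewrite h /=; lia.
  by rewrite divff // pnatr_eq0 sW; lia.
move=> G hG.
have [g0 [g1 [_ _ hg]]] := card_gt1P hG.
split.
  pose h0 (s : seq 'I_(2 * n)) := flatten (map (fun y : 'I_(2 * n) => img g0 g1 n (nat_of_ord y)) s).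
  have hm0 : word_morphism h0 by move=> s t; rewrite /h0 map_cat flatten_cat.
  have hi0 : injective h0.
    elim=> [|x s IH] [|y t] //=.
    - rewrite /h0 /=; have := @img_nonnil _ g0 g1 n y; case: (img g0 g1 n y) => // z l _.
    - rewrite /h0 /=; have := @img_nonnil _ g0 g1 n x; case: (img g0 g1 n x) => // z l _.
    rewrite /h0 /= => E.
    have xy : x = y by apply: ord_inj; exact: (img_prefix hg (ltn_ord x) (ltn_ord y) E).
    subst y; congr (_ :: _); apply: IH.
    by move: E => /(congr1 (drop (size (img g0 g1 n x)))); rewrite !drop_size_cat.
  have hW : h0 W = wpow (Vw g0 g1 n) (n * size (Vw g0 g1 n) + n).
    rewrite wpow_Vw // -img_prefixes // /h0 /W -map_comp.
    congr flatten; apply/eq_in_map => c /wlt hc /=.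
    by have -> : nat_of_ord (insubd x0 c : 'I_(2 * n)) = c := valmk c hc.
  have sV : (0 < size (Vw g0 g1 n))%N by rewrite /Vw size_cat /=; lia.
  set r : rat := (n * size (Vw g0 g1 n) + n)%:R / (size (Vw g0 g1 n))%:R.
  have h1 : ((ratr r)%:E <= Eexp (h0 W))%E.
    apply: ereal_sup_ubound; exists r, (Vw g0 g1 n); split => //.
    split; first by move=> e; move: sV; rewrite e.
    by exists (n * size (Vw g0 g1 n) + n)%N.
  have h2 : (Eexp (h0 W) <= EI G W)%E.
    by apply: ereal_sup_ubound; exists h0.
  have h3 : (n%:R <= ratr r :> Rdefinitions.R).
    rewrite -(ratr_nat Rdefinitions.R n) ler_rat /r ler_pdivlMr ?ltr0n //.
    by rewrite -natrM ler_nat; lia.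
  apply: (lt_le_trans _ (le_trans h1 h2)); rewrite lte_fin; lra.
have UB : (EI G W <= (6 * n)%:R%:E)%E.
  apply: ge_ereal_sup => x [h [hm [hi ->]]].
  apply: ge_ereal_sup => y [r [v [[vn [p [-> E]]] ->]]].
  have hp := @ub_main n G g0 x0 h v p hm hi vn E.
  have sv0 : (0 < size v)%N by case: v vn {E hp}.
  rewrite lee_fin -(ratr_nat Rdefinitions.R (6 * n)) ler_rat.
  by rewrite ler_pdivrMr ?ltr0n // -natrM ler_nat.
exact: (le_lt_trans UB (ltry _)).
Qed.
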